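(* Let $(X,G)$ be a minimal topological dynamical system. The set $\mathcal V=\{F\in 2^X: V(F)=\pi_{eq}(F)\}$ is a compact $G$-invariant subset of $2^X$.
   Context: $G$ is an infinite countable discrete group; a tds $(X,G)$ is a compact metric space with a $G$-action by homeomorphisms; minimal means no proper nonempty closed invariant subset. $\pi_{eq}:X\to X_{eq}$ is the factor map onto the maximal equicontinuous factor, $\nu_{eq}$ the unique invariant probability measure of $(X_{eq},G)$. $2^X$ is the space of nonempty closed subsets with the Hausdorff metric $d_H$, with action $gA=\{ga:a\in A\}$. $\mathcal X=\overline{\{\pi_{eq}^{-1}(y):y\in X_{eq}\}}\subset 2^X$; for $E\in\mathcal X$, $\pi_{\mathcal X}(E)$ is the single point $\pi_{eq}(E)$. $\mathcal X_{eq}^{\mathrm{meas}}=\{E\in\mathcal X:\nu_{eq}(\pi_{\mathcal X}(B^{\mathcal X}_\epsilon(E)))>0\ \forall\epsilon>0\}$, $B^{\mathcal X}_\epsilon(E)$ the open $d_H$-ball in $\mathcal X$. For $F\in 2^X$, $V(F)=\{y\in X_{eq}:\exists E\in\mathcal X_{eq}^{\mathrm{meas}}, E\subset F,\ \pi_{\mathcal X}(E)=y\}$. *)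

(* Defs.v *)
From HB Require Import structures.
From mathcomp Require Import all_boot all_order all_algebra.
From mathcomp Require Import all_classical all_reals all_analysis.
Set Implicit Arguments. Unset Strict Implicit. Unset Printing Implicit Defensive.
Import Order.TTheory GRing.Theory Num.Theory.
Local Open Scope classical_set_scope.
Local Open Scope ring_scope.

(* metric spaces with a distinguished point (needed to build the Borel
   measurable structure g_sigma_algebraType); X_eq is nonempty anyway *)
#[short(type="pmetricType")]
HB.structure Definition PointedMetric (K : numDomainType) :=
  { M of Metric K M & isPointed M }.

Record group_law (G : Type) := GroupLaw {
  gmul : G -> G -> G;
  gone : G;
  ginv : G -> G;
  gmulA : forall a b c, gmul a (gmul b c) = gmul (gmul a b) c;
  gmul1 : forall a, gmul gone a = a;
  gmulV : forall a, gmul (ginv a) a = gone }.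

Definition infinite_countable_group (G : countType) (Gr : group_law G) :=
  infinite_set [set: G].

(* act is an action of the group by homeomorphisms (each act g is continuous,
   and act g^-1 is its continuous inverse by the action laws). *)
Definition is_action {G : Type} (Gr : group_law G) {T : topologicalType}
  (act : G -> T -> T) :=
  [/\ forall x, act (gone Gr) x = x,
      forall g h x, act (gmul Gr g h) x = act g (act h x)
    & forall g, continuous (act g)].

Definition tds {R : realType} {G : Type} (Gr : group_law G) (T : metricType R)
  (act : G -> T -> T) := compact [set: T] /\ is_action Gr act.

Definition minimal {G : Type} {T : topologicalType} (act : G -> T -> T) :=
  forall A : set T, closed A -> A !=set0 ->
    (forall g, act g @` A `<=` A) -> A = setT.

Definition equicontinuous_sys {R : realType} {G : Type} {T : metricType R}
  (act : G -> T -> T) :=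
  forall eps : R, 0 < eps -> exists2 delta : R, 0 < delta &
    forall x y g, mdist x y < delta -> mdist (act g x) (act g y) < eps.

Definition factor_map {G : Type} {X Y : topologicalType}
  (actX : G -> X -> X) (actY : G -> Y -> Y) (p : X -> Y) :=
  [/\ continuous p, (forall y, exists x, p x = y) & forall g x, p (actX g x) = actY g (p x)].

Definition max_equicontinuous_factor {R : realType} {G : Type}
  (Gr : group_law G) {X : metricType R} {Xeq : pmetricType R} (act : G -> X -> X)
  (acteq : G -> Xeq -> Xeq) (pi : X -> Xeq) :=
  [/\ tds Gr acteq, equicontinuous_sys acteq, factor_map act acteq pi &
      forall (Y : metricType R) (actY : G -> Y -> Y) (p : X -> Y),
        tds Gr actY -> equicontinuous_sys actY -> factor_map act actY p ->
        exists q : Xeq -> Y, continuous q /\ forall x, p x = q (pi x)].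

Notation borel_type T := (g_sigma_algebraType (@open T)).

Definition invariant_prob {R : realType} {G : Type} {T : pmetricType R}
  (act : G -> T -> T) (mu : probability (borel_type T) R) :=
  forall g (A : set (borel_type T)), measurable A ->
    mu (act g @^-1` A) = mu A.

Definition unique_invariant_prob {R : realType} {G : Type} {T : pmetricType R}
  (act : G -> T -> T) (nu : probability (borel_type T) R) :=
  invariant_prob act nu /\
  forall mu : probability (borel_type T) R, invariant_prob act mu ->
    forall A : set (borel_type T), measurable A -> mu A = nu A.

Section hyperspace.
Context {R : realType} {X : metricType R}.

(* elements of 2^X : nonempty closed subsets *)
Definition hyp (A : set X) := closed A /\ A !=set0.

(* d_H(E, F) < eps, for E, F compact (nonempty closed in compact X): since
   the sups/infs in the definition of d_H are attained, this is exactly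
   every point of each set is at distance < eps from some point of the other *)
Definition hball (eps : R) (E F : set X) :=
  (forall x, E x -> exists2 y, F y & mdist x y < eps) /\
  (forall y, F y -> exists2 x, E x & mdist y x < eps).

Definition hopen (U : set (set X)) :=
  U `<=` hyp /\
  forall F, U F -> exists2 eps : R, 0 < eps &
    forall F', hyp F' -> hball eps F F' -> U F'.

Definition hcompact (K : set (set X)) :=
  K `<=` hyp /\
  forall (I : Type) (U : I -> set (set X)), (forall i, hopen (U i)) ->
    K `<=` \bigcup_i U i ->
    exists2 D : set I, finite_set D & K `<=` \bigcup_(i in D) U i.

Definition hact {G : Type} (act : G -> X -> X) (g : G) (A : set X) := act g @` A.
End hyperspace.

Section fibres.
Context {R : realType} {X : metricType R} {Xeq : pmetricType R} (pi : X -> Xeq)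
  (nu : probability (borel_type Xeq) R).

(* calX = closure in 2^X of the fibres pi^-1(y) *)
Definition calX : set (set X) :=
  [set E | hyp E /\ forall eps : R, 0 < eps ->
     exists y : Xeq, hball eps E (pi @^-1` [set y])].

(* pi_calX (B^calX_eps(E)) : the points pi(F), F in calX, d_H(E,F) < eps *)
Definition piX_ball (eps : R) (E : set X) : set Xeq :=
  [set y | exists F, [/\ calX F, hball eps E F & pi @` F = [set y]]].

Definition calX_meas : set (set X) :=
  [set E | calX E /\ forall eps : R, 0 < eps ->
     (0 < nu (piX_ball eps E : set (borel_type Xeq)))%E].

Definition Vset (F : set X) : set Xeq :=
  [set y | exists E, [/\ calX_meas E, E `<=` F & pi @` E = [set y]]].

Definition calV : set (set X) := [set F | hyp F /\ Vset F = pi @` F].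
End fibres.

(* Main.v *)
Require Import Defs.
From HB Require Import structures.
From mathcomp Require Import all_boot all_order all_algebra.
From mathcomp Require Import all_classical all_reals all_analysis.
From mathcomp Require Import lra.
Set Implicit Arguments. Unset Strict Implicit. Unset Printing Implicit Defensive.
Import Order.TTheory GRing.Theory Num.Theory.
Local Open Scope classical_set_scope.
Local Open Scope ring_scope.



Lemma fI T (U : set_system T) (UF : Filter U) A B : U A -> U B -> U (A `&` B).
Proof. exact: (@filterI _ _ UF). Qed.
Lemma fS T (U : set_system T) (UF : Filter U) (A B : set T) : U A -> A `<=` B -> U B.
Proof. by move=> UA AB; exact: (@filterS _ _ UF _ _ AB UA). Qed.
Lemma fE T (U : set_system T) (UF : Filter U) (A : set T) : (forall x, A x) -> U A.
Proof. exact: (@filterE _ _ UF). Qed.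
Lemma fEx T (U : set_system T) (UF : ProperFilter U) (A : set T) : U A -> exists x, A x.
Proof. exact: (@filter_ex _ _ UF). Qed.
Lemma uF T (U : set_system T) (UF : UltraFilter U) : ProperFilter U.
Proof. exact: ultra_proper. Qed.
Lemma pF T (U : set_system T) (UF : ProperFilter U) : Filter U.
Proof. by case: UF. Qed.

Section metric_basics.
Context {R : realType} {X : metricType R}.

Lemma nbhsM (x : X) (P : set X) :
  nbhs x P <-> exists2 r : R, 0 < r & forall y, mdist x y < r -> P y.
Proof.
rewrite -metricType_numDomainType.filter_from_mdist_nbhs /filter_from /=; split.
- by move=> [r r0 H]; exists r => // y /H.
- by move=> [r r0 H]; exists r => // y /H.
Qed.

Lemma closedP (A : set X) x : closed A ->
  (forall e : R, 0 < e -> exists2 a, A a & mdist x a < e) -> A x.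
Proof.
move=> cA H; move: cA => /closure_id -> B /nbhsM [r r0 Hr].
have [a Aa xa] := H r r0; exists a; split => //; exact: Hr.
Qed.

Lemma closed_crit (A : set X) :
  (forall x, (forall e : R, 0 < e -> exists2 a, A a & mdist x a < e) -> A x) ->
  closed A.
Proof.
move=> H; apply/closure_id; apply/seteqP; split; first exact: subset_closure.
move=> x clx; apply: H => e e0.
have [|a [Aa xa]] := clx [set y | mdist x y < e]; last by exists a.
by apply/nbhsM; exists e.
Qed.

Lemma md_tri (x y z : X) : mdist x z <= mdist x y + mdist y z.
Proof. exact: metric_triangle. Qed.

Lemma md_sym (x y : X) : mdist x y = mdist y x.
Proof. exact: metric_sym. Qed.

Lemma md_lt3 (x y z : X) a b : mdist x y < a -> mdist y z < b -> mdist x z < a + b.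
Proof. by move=> h1 h2; apply: le_lt_trans (md_tri x y z) _; exact: ltrD. Qed.

Lemma md_eq (x y : X) : (forall e : R, 0 < e -> mdist x y < e) -> x = y.
Proof.
move=> H; apply: mdist_positivity; apply/eqP; rewrite eq_le mdist_ge0 andbT.
apply/ler_addgt0Pr => e e0; rewrite add0r; exact/ltW/H.
Qed.

Lemma closed_cball (z : X) (c : R) : closed [set y | mdist z y <= c].
Proof.
apply: closed_crit => x H /=; apply/ler_addgt0Pr => e e0.
have [a Ha xa] := H e e0.
by apply: le_trans (md_tri z a x) _; rewrite lerD // md_sym ltW.
Qed.

End metric_basics.



Section compact_basics.
Context {R : realType} {X : metricType R}.

Lemma open_mball (z : X) (c : R) : open [set y | mdist z y < c].
Proof.
rewrite openE => x /= zx; rewrite /interior /=; apply/nbhsM.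
exists (c - mdist z x); first by rewrite subr_gt0.
move=> y xy /=; apply: le_lt_trans (md_tri z x y) _.
by rewrite -ltrBrDl.
Qed.

Lemma net (cX : compact [set: X]) (r : X -> R) : (forall x, 0 < r x) ->
  exists s : seq X, forall x, exists2 z, z \in s & mdist z x < r z.
Proof.
move=> r0; apply: contrapT => Hn.
pose B (s : seq X) := [set x | forall z, z \in s -> ~ mdist z x < r z].
have FF : ProperFilter (filter_from [set: seq X] B).
  apply: filter_from_proper; last first.
    move=> s _; apply: contrapT => Hne; apply: Hn; exists s => x.
    apply: contrapT => Hx; apply: Hne; exists x => z zs zx; apply: Hx; by exists z.
  apply: filter_from_filter; first by exists [::].
  move=> s t _ _; exists (s ++ t) => // x Hx; split => z zs; apply: Hx;
    by rewrite mem_cat zs ?orbT.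
have [p [_ clp]] := cX _ FF (filterT).
have pn : nbhs p [set y | mdist p y < r p] by apply/nbhsM; exists (r p).
have [x [Bx px]] := clp (B [:: p]) _ (ex_intro2 _ _ [:: p] I (fun _ h => h)) pn.
exact: (Bx p (mem_head _ _)).
Qed.

Lemma seq_min (s : seq X) (r : X -> R) : (forall x, 0 < r x) ->
  exists2 d : R, 0 < d & forall z, z \in s -> d <= r z.
Proof.
move=> r0; elim: s => [|a s [d d0 Hd]]; first by exists 1.
exists (Order.min d (r a)); first by rewrite lt_min d0 r0.
move=> z; rewrite inE => /orP [/eqP ->|zs]; first by rewrite ge_min lexx orbT.
by rewrite ge_min Hd.
Qed.

Lemma unif_cont (Y : metricType R) (f : X -> Y) : compact [set: X] ->
  continuous f -> forall e : R, 0 < e ->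
  exists2 d : R, 0 < d & forall x y, mdist x y < d -> mdist (f x) (f y) < e.
Proof.
move=> cX hf e e0.
have /choice [r Hr] : forall z, exists r : R, 0 < r /\
    forall y, mdist z y < r -> mdist (f z) (f y) < e / 2.
  move=> z; have nb : nbhs (f z) [set w | mdist (f z) w < e / 2].
    by apply/nbhsM; exists (e / 2) => //; rewrite divr_gt0.
  have /nbhsM [r r0 H] := hf z _ nb. exists r; split => // y zy; exact: H.
have r0 : forall x, 0 < r x / 2 by move=> x; rewrite divr_gt0 //; case: (Hr x).
have [s Hs] := net cX r0.
have [d d0 Hd] := seq_min s r0.
exists d => // x y xy.
have [z zs zx] := Hs x.
have h1 : mdist (f z) (f x) < e / 2 by apply: (Hr z).2; apply: lt_trans zx _; rewrite ltr_pdivrMr // ltr_pMr //; [rewrite ltr1n|case: (Hr z)].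
have h2 : mdist (f z) (f y) < e / 2.
  apply: (Hr z).2; apply: lt_le_trans (md_lt3 zx xy) _.
  apply: le_trans (lerD (lexx _) (Hd z zs)) _.
  by rewrite -splitr.
by rewrite [e]splitr; rewrite md_sym in h1; exact: md_lt3 h1 h2.
Qed.

End compact_basics.



Section hyper.
Context {R : realType} {X : metricType R}.

Lemma hball_sym (e : R) (A B : set X) : hball e A B -> hball e B A.
Proof. by case=> h1 h2; split. Qed.

Lemma hball_mono (a b : R) (A B : set X) : a <= b -> hball a A B -> hball b A B.
Proof.
move=> ab [h1 h2]; split.
- by move=> x /h1 [y By xy]; exists y => //; exact: lt_le_trans ab.
- by move=> x /h2 [y By xy]; exists y => //; exact: lt_le_trans ab.
Qed.

Lemma hball_tri (a b : R) (A B C : set X) :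
  hball a A B -> hball b B C -> hball (a + b) A C.
Proof.
move=> [h1 h2] [k1 k2]; split.
- move=> x /h1 [y /k1 [z Cz yz] xy]; exists z => //; exact: md_lt3 xy yz.
- move=> z /k2 [y /h2 [x Ax yx] zy]; exists x => //; rewrite addrC; exact: md_lt3 zy yx.
Qed.

Definition hmeets (x : X) (r : R) : set (set X) :=
  [set F | exists2 y, F y & mdist x y < r].

Definition hlim (U : set (set (set X))) : set X :=
  [set x | forall r : R, 0 < r -> U (hmeets x r)].

Lemma U_seq (U : set (set (set X))) (UF : Filter U) (s : seq X)
  (Q : X -> set (set X)) : (forall z, z \in s -> U (Q z)) ->
  U [set F | forall z, z \in s -> Q z F].
Proof.
elim: s => [|a s IH] H.
  by apply: fE => F z; rewrite in_nil.
have := fI UF (H a (mem_head _ _)) (IH (fun z zs => H z (@mem_behead _ (a :: s) z zs))).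
move=> hh; apply: (fS UF hh); move=> F [Qa Qs] z; rewrite inE => /orP [/eqP -> //|]; exact: Qs.
Qed.

Variable (cX : compact [set: X]).

Lemma not_closed_ball (C : set X) x : closed C -> ~ C x ->
  exists2 r : R, 0 < r & forall y, mdist x y < r -> ~ C y.
Proof.
move=> cC nCx; apply: contrapT => H; apply: nCx; apply: closedP cC _ => e e0.
apply: contrapT => H2; apply: H; exists e => // y xy Cy; apply: H2; by exists y.
Qed.

Lemma unif_strict (E F : set X) (eps : R) : closed E ->
  (forall x, E x -> exists2 y, F y & mdist x y < eps) ->
  exists2 d : R, 0 < d & forall x, E x -> exists2 y, F y & mdist x y < eps - d.
Proof.
move=> cE H.
have /choice [s Hs] : forall x, exists s : R, 0 < s /\ forall x', mdist x x' < s ->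
    E x' -> exists2 y, F y & mdist x' y < eps - s.
  move=> x; case: (pselect (E x)) => Ex.
    have [y Fy xy] := H x Ex; exists ((eps - mdist x y) / 2); split.
      by rewrite divr_gt0 // subr_gt0.
    move=> x' xx' _; exists y => //.
    apply: le_lt_trans (md_tri x' x y) _; rewrite md_sym.
    have : mdist x x' + mdist x y < eps - (eps - mdist x y) / 2.
      move: xx'; set t := mdist x y; set u := mdist x x' => hu; lra.
    by [].
  have [r r0 Hr] := not_closed_ball cE Ex; exists r; split => // x' xx' Ex'.
  by have := Hr _ xx'.
have s0 : forall x, 0 < s x by move=> x; case: (Hs x).
have [t Ht] := net cX s0; have [d d0 Hd] := seq_min t s0.
exists d => // x Ex; have [z zt zx] := Ht x.
have [y Fy xy] := (Hs z).2 x zx Ex; exists y => //.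
by apply: lt_le_trans xy _; rewrite lerB // Hd.
Qed.

Lemma hball_lt (E F : set X) (eps : R) : closed E -> closed F ->
  hball eps E F -> exists2 r : R, r < eps & hball r E F.
Proof.
move=> cE cF [h1 h2].
have [d1 d10 H1] := unif_strict cE h1.
have [d2 d20 H2] := unif_strict cF h2.
exists (eps - Order.min d1 d2); first by rewrite ltrBlDr ltrDl lt_min d10 d20.
split.
- move=> x /H1 [y Fy xy]; exists y => //; apply: lt_le_trans xy _.
  by rewrite lerB // ge_min lexx.
- move=> x /H2 [y Fy xy]; exists y => //; apply: lt_le_trans xy _.
  by rewrite lerB // ge_min lexx orbT.
Qed.

End hyper.



Section hlimit.
Context {R : realType} {X : metricType R}.
Variable (cX : compact [set: X]).
Variable (U : set (set (set X))) (UU : UltraFilter U).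
Let UP : ProperFilter U := uF UU.
Let UFl : Filter U := pF UP.

Lemma ultra_or (A : set (set X)) : U A \/ U [set F | ~ A F].
Proof. exact: in_ultra_setVsetC. Qed.

Lemma key_cluster (C : set X) : closed C -> U [set F | exists2 y, F y & C y] ->
  exists2 x, C x & hlim U x.
Proof.
move=> cC UC; apply: contrapT => Hn.
have /choice [r Hr] : forall x, exists r : R, 0 < r /\
    ((forall y, mdist x y < r -> ~ C y) \/ U [set F | ~ hmeets x r F]).
  move=> x; case: (pselect (C x)) => Cx; last first.
    by have [r r0 Hr] := not_closed_ball cC Cx; exists r; split => //; left.
  have : ~ hlim U x by move=> h; apply: Hn; exists x.
  move=> /existsNP [r /not_implyP [r0 nU]]; exists r; split => //; right.
  by case: (ultra_or (hmeets x r)).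
have r0 : forall x, 0 < r x by move=> x; case: (Hr x).
have [s Hs] := net cX r0.
pose Q := (fun z => [set F | (forall y, mdist z y < r z -> ~ C y)
    \/ ~ hmeets z (r z) F]).
have : U [set F | forall z, z \in s -> Q z F].
  apply: U_seq => //.
  move=> z _; case: (Hr z) => _ [h|h]; first by apply: fE => F; left.
  by apply: (fS UFl h) => F; right.
move=> U1; have [F [HF [y Fy Cy]]] := fEx UP (fI UFl U1 UC).
have [z zs zy] := Hs y; case: (HF z zs) => [h|h]; first exact: (h y zy).
by apply: h; exists y.
Qed.

Lemma hlim_b (eps : R) : 0 < eps ->
  U [set F | forall x, hlim U x -> exists2 y, F y & mdist x y < eps].
Proof.
move=> e0; have e4 : 0 < eps / 4 by rewrite divr_gt0.
have e2 : 0 < eps / 2 by rewrite divr_gt0.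
have [s Hs] := net cX (fun _ => e4).
pose Q := (fun z => [set F | (forall x, hlim U x -> ~ mdist z x < eps / 4)
  \/ exists2 x, (hlim U x /\ mdist z x < eps / 4) & hmeets x (eps / 2) F]).
have : U [set F | forall z, z \in s -> Q z F].
  apply: U_seq => //.
  move=> z _; case: (pselect (exists x, hlim U x /\ mdist z x < eps / 4)).
    move=> [x [Lx zx]]; have := Lx (eps / 2) (e2).
    by move=> hh; apply: (fS UFl hh) => F mF; right; exists x.
  by move=> nx; apply: fE => F; left => x Lx zx; apply: nx; exists x.
move=> hh; apply: (fS UFl hh) => F HQ x Lx; have [z zs zx] := Hs x.
case: (HQ z zs) => [h|[x' [Lx' zx'] [y Fy x'y]]]; first by case: (h x Lx zx).
exists y => //; rewrite md_sym in zx.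
have := md_lt3 (md_lt3 zx zx') x'y.
have -> : eps / 4 + eps / 4 + eps / 2 = eps by lra.
by [].
Qed.

Lemma hlim_a (eps : R) : 0 < eps ->
  U [set F | forall y, F y -> exists2 x, hlim U x & mdist y x < eps].
Proof.
move=> e0; have e3 : 0 < eps / 3 by rewrite divr_gt0.
have [s Hs] := net cX (fun _ => e3).
pose Q := (fun z => [set F | (exists2 x, hlim U x & mdist z x <= eps / 3)
  \/ forall y, F y -> ~ mdist z y < eps / 3]).
have : U [set F | forall z, z \in s -> Q z F].
  apply: U_seq => //.
  move=> z _; case: (pselect (exists2 x, hlim U x & mdist z x <= eps / 3)).
    by move=> h; apply: fE => F; left.
  move=> nx; case: (ultra_or [set F | forall y, F y -> ~ mdist z y < eps / 3]).
    by move=> hh; apply: (fS UFl hh) => F h; right.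
  move=> h; have : U [set F | exists2 y, F y & [set y | mdist z y <= eps / 3] y].
    apply: (fS UFl h) => F nH; apply: contrapT => nex; apply: nH => y Fy dy.
    by apply: nex; exists y => //; exact: ltW.
  move=> /(key_cluster (@closed_cball _ _ z (eps / 3))) [x zx Lx].
  by case: nx; exists x.
move=> hh; apply: (fS UFl hh) => F HQ y Fy; have [z zs zy] := Hs y.
case: (HQ z zs) => [[x Lx zx]|h]; last by case: (h y Fy zy).
exists x => //; rewrite md_sym in zy.
apply: le_lt_trans (md_tri y z x) _.
have : mdist y z + mdist z x < eps / 3 + eps / 3 + eps / 3.
  by rewrite -addrA ltr_leD // ler_wpDl // ltW.
have -> : eps / 3 + eps / 3 + eps / 3 = eps by lra.
by [].
Qed.

Lemma hlim_spec (eps : R) : 0 < eps -> U [set F | hball eps (hlim U) F].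
Proof.
move=> e0; apply: (fS UFl (fI UFl (hlim_a e0) (hlim_b e0))) => F [h1 h2].
split => x Hx.
- by have [y Fy xy] := h2 x Hx; exists y.
- by have [y Fy xy] := h1 x Hx; exists y.
Qed.

Lemma hlim_hyp : U hyp -> hyp (hlim U).
Proof.
move=> Uh; split.
  apply: closed_crit => x H r r0.
  have r2 : 0 < r / 2 by rewrite divr_gt0.
  have [a La xa] := H (r / 2) r2.
  apply: (fS UFl (La (r / 2) r2)) => F [y Fy ay]; exists y => //.
  by rewrite [r]splitr; exact: md_lt3 xa ay.
have [F [[_ [y Fy]] H]] := fEx UP (fI UFl Uh (hlim_a (@ltr01 R))).
by have [x Lx _] := H y Fy; exists x.
Qed.

End hlimit.



Section hcomp.
Context {R : realType} {X : metricType R}.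

Lemma ultra_of (P : R -> set (set X)) :
  (forall d1 d2, 0 < d1 -> d1 <= d2 -> P d1 `<=` P d2) ->
  (forall d, 0 < d -> P d !=set0) ->
  exists U, UltraFilter U /\ forall d, 0 < d -> U (P d).
Proof.
move=> mono ne.
have FF : ProperFilter (filter_from [set d : R | 0 < d] P).
  apply: filter_from_proper; last exact: ne.
  apply: filter_from_filter; first by exists 1; rewrite /= ltr01.
  move=> i j i0 j0; have m0 : 0 < Order.min i j by rewrite lt_min i0 j0.
  exists (Order.min i j); first exact: m0.
  move=> F PF; split; [apply: (mono _ _ m0 _ _ PF) | apply: (mono _ _ m0 _ _ PF)];
    by rewrite ge_min lexx ?orbT.
have [U [UU sub]] := ultraFilterLemma FF.
exists U; split => // d d0; apply: sub; by exists d.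
Qed.

Lemma hcompact_of (K : set (set X)) : compact [set: X] -> K `<=` hyp ->
  (forall U, UltraFilter U -> U K -> K (hlim U)) -> hcompact K.
Proof.
move=> cX Kh Kcl; split => // I Uc hop cov.
apply: contrapT => nfin.
pose B (D : set I) := K `\` \bigcup_(i in D) Uc i.
have FF : ProperFilter (filter_from [set D : set I | finite_set D] B).
  apply: filter_from_proper.
    apply: filter_from_filter; first by exists set0; exact: finite_set0.
    move=> D1 D2 f1 f2; exists (D1 `|` D2); first by rewrite /= finite_setU.
    move=> F [KF nU]; split; split => // -[i Di UiF]; apply: nU; exists i => //;
      by [left | right].
  move=> D fD; apply: contrapT => ne; apply: nfin; exists D => // F KF.
  apply: contrapT => nF; apply: ne; by exists F.
have [U [UU sub]] := ultraFilterLemma FF.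
have UP := uF UU; have UFl := pF UP.
have UK : U K by apply: sub; exists set0; [exact: finite_set0 | move=> F []].
have UH : U hyp by apply: (fS UFl UK).
have KL := Kcl U UU UK.
have [i _ UiL] := cov _ KL.
have [_ Hop] := hop i; have [eps e0 He] := Hop _ UiL.
have UB : U (B [set i]) by apply: sub; exists [set i] => //; exact: finite_set1.
have [F [[HF hF] [_ nU]]] := fEx UP (fI UFl (fI UFl UH (hlim_spec cX UU e0)) UB).
by apply: nU; exists i => //; exact: He.
Qed.

End hcomp.



Lemma closed_meas {R : realType} {Y : pmetricType R} (A : set Y) :
  closed A -> measurable (A : set (borel_type Y)).
Proof.
move=> cA; rewrite -(setCK A); apply: measurableC.
by apply: sub_sigma_algebra; exact: closed_openC.
Qed.

Section fib.
Context {R : realType} {X : metricType R} {Xeq : pmetricType R} (pi : X -> Xeq)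
  (nu : probability (borel_type Xeq) R).
Variables (cX : compact [set: X]) (cpi : continuous pi).

Lemma nu_mono (A B : set (borel_type Xeq)) : measurable A -> measurable B ->
  A `<=` B -> (nu A <= nu B)%E.
Proof. by move=> mA mB AB; apply: le_measure => //; rewrite inE. Qed.

Lemma calX_hyp E : calX pi E -> hyp E.
Proof. by case. Qed.

Lemma Vset_sub F : Vset pi nu F `<=` pi @` F.
Proof.
move=> y [E [[[[_ [x Ex]] _] _] EF piE]].
have : (pi @` E) y by rewrite piE.
by case=> x' Ex' <-; exists x' => //; exact: EF.
Qed.

Lemma pi_lim (U : set (set (set X))) (UU : UltraFilter U) (y : Xeq) :
  U hyp ->
  (forall d : R, 0 < d -> U [set F | exists y', pi @` F = [set y'] /\ mdist y y' < d]) ->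
  pi @` hlim U = [set y].
Proof.
move=> Uh H; have UP := uF UU; have UFl := pF UP.
have [_ [x0 Lx0]] := hlim_hyp cX UU Uh.
suff Hx : forall x, hlim U x -> pi x = y.
  apply/seteqP; split => [_ [x Lx <-]|_ ->]; first by rewrite /= Hx.
  by exists x0 => //; exact: Hx.
move=> x Lx; apply/esym/md_eq => z z0.
have z2 : 0 < z / 2 by rewrite divr_gt0.
have [d d0 Hd] := unif_cont cX cpi z2.
have [F [[HF1 _] [y' [piF yy']]]] := fEx UP (fI UFl (hlim_spec cX UU d0) (H _ z2)).
have [x' Fx' xx'] := HF1 x Lx.
have : (pi @` F) (pi x') by exists x'.
rewrite piF => px'.
have h := Hd _ _ xx'; rewrite px' md_sym in h.
by rewrite [z]splitr; exact: md_lt3 yy' h.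
Qed.

Lemma calX_closed (U : set (set (set X))) (UU : UltraFilter U) :
  U (calX pi) -> calX pi (hlim U).
Proof.
move=> UX; have UP := uF UU; have UFl := pF UP.
have Uh : U hyp by apply: (fS UFl UX) => F [].
split; first exact: hlim_hyp.
move=> e e0; have e2 : 0 < e / 2 by rewrite divr_gt0.
have [F [HF [_ /(_ _ e2) [y Hy]]]] := fEx UP (fI UFl (hlim_spec cX UU e2) UX).
exists y; rewrite [e]splitr; exact: hball_tri HF Hy.
Qed.


Lemma closure_piX (r eps : R) (E : set X) : r < eps ->
  closure (piX_ball pi r E) `<=` piX_ball pi eps E.
Proof.
move=> reps y cly.
pose P (d : R) := [set F | calX pi F /\ hball r E F /\
  exists y', pi @` F = [set y'] /\ mdist y y' < d].
have [U [UU HU]] : exists U, UltraFilter U /\ forall d, 0 < d -> U (P d).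
  apply: ultra_of.
    move=> d1 d2 _ d12 F [h1 [h2 [y' [h3 h4]]]]; split => //; split => //.
    by exists y'; split => //; exact: lt_le_trans d12.
  move=> d d0; have nb : nbhs y [set y' | mdist y y' < d].
    by apply/nbhsM; exists d.
  have [y' [[F [h1 h2 h3]] h4]] := cly _ nb.
  by exists F; split => //; split => //; exists y'.
have UP := uF UU; have UFl := pF UP.
have Uh : U hyp by apply: (fS UFl (HU _ ltr01)) => F [[]].
exists (hlim U); split.
- apply: (calX_closed UU); apply: (fS UFl (HU _ ltr01)) => F [h _] //.
- have er : 0 < eps - r by rewrite subr_gt0.
  have [F1 [HF [_ [hr _]]]] := fEx UP (fI UFl (hlim_spec cX UU er) (HU _ ltr01)).
  have := hball_tri hr (hball_sym HF).
  by have -> : r + (eps - r) = eps by lra.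
- have HH : forall d : R, 0 < d -> U [set F | exists y0, pi @` F = [set y0] /\ mdist y y0 < d].
    by move=> d d0; apply: (fS UFl (HU _ d0)) => F [_ [_ h]]; exact: h.
  exact: (pi_lim UU Uh HH).
Qed.

Lemma piX_meas (eps : R) (E : set X) : hyp E ->
  measurable (piX_ball pi eps E : set (borel_type Xeq)).
Proof.
move=> hE.
have -> : piX_ball pi eps E =
    \bigcup_n closure (piX_ball pi (eps - n.+1%:R^-1) E).
  apply/seteqP; split.
    move=> y [F [XF hF piF]].
    have [r reps hr] := hball_lt cX hE.1 (calX_hyp XF).1 hF.
    pose n := Num.truncn ((eps - r)^-1).
    have er : 0 < eps - r by rewrite subr_gt0.
    have hn : n.+1%:R^-1 < eps - r.
      rewrite -[X in _ < X]invrK ltf_pV2 ?posrE ?invr_gt0 //.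
      exact: truncnS_gt.
    exists n => //; apply: subset_closure; exists F; split => //.
    by apply: hball_mono hr; rewrite lerBrDr -lerBrDl ltW.
  move=> y [n _ /closure_piX]; apply.
  by rewrite ltrBlDr ltrDl invr_gt0 ltr0n.
apply: bigcupT_measurable => n; apply: closed_meas; exact: closed_closure.
Qed.

Lemma calX_meas_closed (U : set (set (set X))) (UU : UltraFilter U) :
  U (calX_meas pi nu) -> calX_meas pi nu (hlim U).
Proof.
move=> UM; have UP := uF UU; have UFl := pF UP.
have Uh : U hyp by apply: (fS UFl UM) => F [[]].
split; first by apply: (calX_closed UU); apply: (fS UFl UM) => F [].
move=> e e0; have e2 : 0 < e / 2 by rewrite divr_gt0.
have [F [HF [XF /(_ _ e2) nuF]]] := fEx UP (fI UFl (hlim_spec cX UU e2) UM).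
apply: lt_le_trans nuF _; apply: nu_mono.
- exact: piX_meas (calX_hyp XF).
- exact: piX_meas (hlim_hyp cX UU Uh).
move=> y [F' [XF' hF' piF']]; exists F'; split => //.
by rewrite [e]splitr; exact: hball_tri HF hF'.
Qed.

Lemma calV_closed (U : set (set (set X))) (UU : UltraFilter U) :
  U (calV pi nu) -> calV pi nu (hlim U).
Proof.
move=> UV; have UP := uF UU; have UFl := pF UP.
have Uh : U hyp by apply: (fS UFl UV) => F [].
have hL := hlim_hyp cX UU Uh.
split => //; apply/seteqP; split; first exact: Vset_sub.
move=> _ [x Lx <-].
pose P (d : R) := [set E | calX_meas pi nu E /\
  (exists F', [/\ calV pi nu F', hball d (hlim U) F' & E `<=` F']) /\
  exists y', pi @` E = [set y'] /\ mdist (pi x) y' < d].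
have [U2 [UU2 HU2]] : exists U2, UltraFilter U2 /\ forall d, 0 < d -> U2 (P d).
  apply: ultra_of.
    move=> d1 d2 _ d12 E [h1 [[F' [h2 h3 h4]] [y' [h5 h6]]]]; split => //; split.
      by exists F'; split => //; exact: hball_mono h3.
    by exists y'; split => //; exact: lt_le_trans d12.
  move=> d d0; have [d1 d10 Hd1] := unif_cont cX cpi d0.
  have d20 : 0 < Order.min d d1 by rewrite lt_min d0 d10.
  have [F' [hF [hypF' VF']]] := fEx UP (fI UFl (hlim_spec cX UU d20) UV).
  have [x' F'x' xx'] := hF.1 x Lx.
  have : (pi @` F') (pi x') by exists x'.
  rewrite -VF' => -[E [ME EF' piE]].
  exists E; split => //; split.
    exists F'; split => //.
    by apply: hball_mono hF; rewrite ge_min lexx.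
  exists (pi x'); split => //; apply: Hd1; apply: lt_le_trans xx' _.
  by rewrite ge_min lexx orbT.
have UP2 := uF UU2; have UFl2 := pF UP2.
have Uh2 : U2 hyp by apply: (fS UFl2 (HU2 _ ltr01)) => E [[[]]].
exists (hlim U2); split.
- apply: (calX_meas_closed UU2); apply: (fS UFl2 (HU2 _ ltr01)) => E [h _] //.
- move=> e Le; apply: (closedP hL.1) => z z0.
  have z2 : 0 < z / 2 by rewrite divr_gt0.
  have [E [[hE2 _] [_ [[F' [_ hF' EF']] _]]]] :=
    fEx UP2 (fI UFl2 (hlim_spec cX UU2 z2) (HU2 _ z2)).
  have [e' Ee' ee'] := hE2 e Le.
  have [l Ll e'l] := hF'.2 e' (EF' _ Ee').
  by exists l => //; rewrite [z]splitr; exact: md_lt3 ee' e'l.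
- apply: (pi_lim UU2) => // d d0; apply: (fS UFl2 (HU2 _ d0)) => E [_ [_ h]].
  exact: h.
Qed.

Lemma calV_hcompact : hcompact (calV pi nu).
Proof.
apply: hcompact_of => //; first by move=> F [].
move=> U UU; exact: calV_closed.
Qed.

End fib.



Lemma gmulVr {G : Type} (Gr : group_law G) g : gmul Gr g (ginv Gr g) = gone Gr.
Proof.
have e1 : gmul Gr g (ginv Gr g) = gmul Gr (gmul Gr (ginv Gr (ginv Gr g)) (ginv Gr g))
    (gmul Gr g (ginv Gr g)) by rewrite gmulV gmul1.
rewrite e1 -gmulA (gmulA Gr (ginv Gr g) g (ginv Gr g)) (gmulV Gr g) gmul1.
exact: gmulV.
Qed.

Lemma act_K {G : Type} (Gr : group_law G) {T : topologicalType} (act : G -> T -> T) :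
  is_action Gr act -> forall g x, act (ginv Gr g) (act g x) = x.
Proof. by case=> h1 h2 _ g x; rewrite -h2 gmulV h1. Qed.

Lemma act_Kr {G : Type} (Gr : group_law G) {T : topologicalType} (act : G -> T -> T) :
  is_action Gr act -> forall g x, act g (act (ginv Gr g) x) = x.
Proof. by case=> h1 h2 _ g x; rewrite -h2 gmulVr h1. Qed.

Lemma cont_meas {R : realType} {Y : pmetricType R} (f : Y -> Y) :
  continuous f -> forall B : set (borel_type Y), measurable B ->
  measurable (f @^-1` B : set (borel_type Y)).
Proof.
move=> cf B mB.
have mf : measurable_fun (setT : set (borel_type Y)) (f : borel_type Y -> borel_type Y).
  have := (@measurability _ _ (borel_type Y) (borel_type Y) setT f (@open Y) erefl); apply.
  move=> _ [A oA <-]; rewrite setTI; apply: sub_sigma_algebra.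
  by move/continuousP : cf; apply.
by have := mf measurableT B mB; rewrite setTI.
Qed.

Section inv.
Context {R : realType} {G : Type} (Gr : group_law G) {X : metricType R}
  (act : G -> X -> X) {Xeq : pmetricType R} (acteq : G -> Xeq -> Xeq)
  (pi : X -> Xeq) (nu : probability (borel_type Xeq) R).
Variables (cX : compact [set: X]) (cpi : continuous pi)
  (Hact : is_action Gr act) (Hacteq : is_action Gr acteq)
  (equiv : forall g x, pi (act g x) = acteq g (pi x))
  (inv : invariant_prob acteq nu).

Let actc g : continuous (act g). Proof. by case: Hact. Qed.
Let acteqc g : continuous (acteq g). Proof. by case: Hacteq. Qed.

Lemma hball_act g (eps : R) : 0 < eps -> exists2 d : R, 0 < d &
  forall A B, hball d A B -> hball eps (hact act g A) (hact act g B).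
Proof.
move=> e0; have [d d0 Hd] := unif_cont cX (@actc g) e0.
exists d => // A B [h1 h2]; split.
- move=> _ [x Ax <-]; have [y By xy] := h1 x Ax.
  by exists (act g y); [exists y | exact: Hd].
- move=> _ [x Bx <-]; have [y Ay xy] := h2 x Bx.
  by exists (act g y); [exists y | exact: Hd].
Qed.

Lemma fibre_act g y :
  hact act g (pi @^-1` [set y]) = pi @^-1` [set acteq g y].
Proof.
apply/seteqP; split.
  by move=> _ [x /= px <-]; rewrite /= equiv px.
move=> z /= pz; exists (act (ginv Gr g) z); last exact: act_Kr.
by rewrite /= equiv pz act_K.
Qed.

Lemma hyp_act g A : hyp A -> hyp (hact act g A).
Proof.
move=> [cA [a Aa]]; split; last by exists (act g a), a.
apply: compact_closed; first exact: metric_hausdorff.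
apply: continuous_compact; first exact: continuous_subspaceT.
exact: subclosed_compact cA cX (fun _ _ => I).
Qed.

Lemma calX_act g E : calX pi E -> calX pi (hact act g E).
Proof.
move=> [hE HE]; split; first exact: hyp_act.
move=> e e0; have [d d0 Hd] := hball_act g e0.
have [y Hy] := HE d d0; exists (acteq g y); rewrite -fibre_act; exact: Hd.
Qed.

Lemma pi_act g E y : pi @` E = [set y] -> pi @` (hact act g E) = [set acteq g y].
Proof.
move=> piE; apply/seteqP; split.
  move=> _ [_ [x Ex <-] <-]; rewrite /= equiv.
  have : (pi @` E) (pi x) by exists x.
  by rewrite piE => ->.
move=> _ ->; have : (pi @` E) y by rewrite piE.
by case=> x Ex <-; exists (act g x); [exists x | rewrite equiv].
Qed.

Lemma calX_meas_act g E : calX_meas pi nu E -> calX_meas pi nu (hact act g E).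
Proof.
move=> [XE HE]; split; first exact: calX_act.
move=> e e0; have [d d0 Hd] := hball_act g e0.
apply: lt_le_trans (HE d d0) _.
have mB := piX_meas cX cpi e (hyp_act g (calX_hyp XE)).
rewrite -(inv g mB); apply: nu_mono.
- by move: (piX_meas cX cpi d (calX_hyp XE)) => h; exact h.
- exact: cont_meas.
move=> y [F [XF hF piF]]; exists (hact act g F); split.
- exact: calX_act.
- exact: Hd.
- exact: pi_act.
Qed.

Lemma calV_act g F : calV pi nu F -> calV pi nu (hact act g F).
Proof.
move=> [hF VF]; split; first exact: hyp_act.
apply/seteqP; split; first exact: Vset_sub.
move=> _ [_ [x Fx <-] <-]; rewrite equiv.
have : (pi @` F) (pi x) by exists x.
rewrite -VF => -[E [ME EF piE]].
exists (hact act g E); split.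
- exact: calX_meas_act.
- by move=> _ [z Ez <-]; exists z => //; exact: EF.
- exact: pi_act.
Qed.

Lemma hact_K g F : hact act g (hact act (ginv Gr g) F) = F.
Proof.
apply/seteqP; split.
  by move=> _ [_ [x Fx <-] <-]; rewrite act_Kr.
by move=> x Fx; exists (act (ginv Gr g) x); [exists x | rewrite act_Kr].
Qed.

Lemma calV_inv g : [set hact act g F | F in calV pi nu] = calV pi nu.
Proof.
apply/seteqP; split; first by move=> _ [F VF <-]; exact: calV_act.
by move=> F VF; exists (hact act (ginv Gr g) F); [exact: calV_act | exact: hact_K].
Qed.

End inv.


Unset Implicit Arguments.

Theorem lemma3p7 (R : realType) (G : countType) (Gr : group_law G)
  (X : metricType R) (act : G -> X -> X)
  (Xeq : pmetricType R) (acteq : G -> Xeq -> Xeq) (pi_eq : X -> Xeq)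
  (nu_eq : probability (borel_type Xeq) R) :
  infinite_countable_group Gr ->
  tds Gr act -> minimal act ->
  max_equicontinuous_factor Gr act acteq pi_eq ->
  unique_invariant_prob acteq nu_eq ->
  hcompact (calV pi_eq nu_eq) /\
  forall g : G, [set hact act g F | F in calV pi_eq nu_eq] = calV pi_eq nu_eq.
Proof.
move=> _ [cX Hact] _ [[_ Hacteq] _ [cpi _ equiv] _] [inv _].
split; first exact: (calV_hcompact nu_eq cX cpi).
move=> g; exact: (calV_inv cX cpi Hact Hacteq equiv inv).
Qed.
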